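(* Let $\mathbb{K}$ be a non-Archimedean valued field, $n\ge1$, and $G$ a discrete group such that $H_{n-1}(G, \mathbb{Z})$ is a finitely generated abelian group. Then the comparison map $c^n : H^n_b(G, \mathbb{K}) \to H^n(G, \mathbb{K})$ is injective.
   Context: A non-Archimedean valued field is a field with an absolute value satisfying the ultrametric inequality. $H_{n-1}(G,\mathbb{Z})$ is ordinary group homology with trivial coefficients. $\mathbb{K}$ is a trivial $G$-module; $H^\bullet(G,\mathbb{K})$ is computed by the bar complex of all maps $G^n\to\mathbb{K}$ with $\delta^nf(g_1,\dots,g_{n+1})=f(g_2,\dots,g_{n+1})+\sum_{i=1}^n(-1)^if(g_1,\dots,g_ig_{i+1},\dots,g_{n+1})+(-1)^{n+1}f(g_1,\dots,g_n)$, and $H^\bullet_b(G,\mathbb{K})$ by its subcomplex of bounded maps; $c^n$ is induced by inclusion. *)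

(* Defs.v *)
From mathcomp Require Import all_boot all_order all_algebra.
From mathcomp Require Import boolp reals.
Set Implicit Arguments. Unset Strict Implicit. Unset Printing Implicit Defensive.
Import Order.TTheory GRing.Theory Num.Theory.
Local Open Scope ring_scope.

Definition is_group (G : Type) (mul : G -> G -> G) (one : G) (inv : G -> G) : Prop :=
  [/\ (forall x y z, mul x (mul y z) = mul (mul x y) z),
      (forall x, mul one x = x), (forall x, mul x one = x),
      (forall x, mul (inv x) x = one) & (forall x, mul x (inv x) = one)].

Definition nonarch_abs (R : realType) (K : fieldType) (abs : K -> R) : Prop :=
  [/\ (forall x, 0 <= abs x), (forall x, abs x = 0 <-> x = 0),
      (forall x y, abs (x * y) = abs x * abs y) &
      (forall x y, abs (x + y) <= Num.max (abs x) (abs y))].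

Section Faces.
Variables (G : Type) (mul : G -> G -> G).

Definition face_first n (g : 'I_n.+1 -> G) : 'I_n -> G := fun j => g (lift ord0 j).
Definition face_last n (g : 'I_n.+1 -> G) : 'I_n -> G :=
  fun j => g (widen_ord (leqnSn n) j).
(* for k : 'I_n (0-based, k = i-1 with 1 <= i <= n):
   (g_1,...,g_{n+1}) |-> (g_1,...,g_i g_{i+1},...,g_{n+1}) *)
Definition face_mul n (g : 'I_n.+1 -> G) (k : 'I_n) : 'I_n -> G :=
  fun j => if (j < k)%N then g (widen_ord (leqnSn n) j)
           else if (j == k)%N then mul (g (widen_ord (leqnSn n) j)) (g (lift ord0 j))
           else g (lift ord0 j).
End Faces.

Section Cochains.
Variables (G : Type) (mul : G -> G -> G) (K : fieldType).

Definition cochain n := ('I_n -> G) -> K.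

Definition coboundary n (f : cochain n) : cochain n.+1 := fun g =>
  f (face_first g) + \sum_(k < n) (-1) ^+ k.+1 * f (face_mul mul g k)
  + (-1) ^+ n.+1 * f (face_last g).

Definition bounded_cochain (R : realType) (abs : K -> R) n (f : cochain n) : Prop :=
  exists M : R, forall g, abs (f g) <= M.

(* Injectivity of c^n : H^n_b(G,K) -> H^n(G,K), n >= 1, unfolded:
   every bounded n-cocycle which is the coboundary of some (arbitrary)
   (n-1)-cochain is the coboundary of a bounded (n-1)-cochain. *)
Definition comparison_injective (R : realType) (abs : K -> R) (m : nat) : Prop :=
  (* here n = m.+1 *)
  forall f : cochain m.+1,
    bounded_cochain abs f ->
    (forall g, coboundary f g = 0) ->
    (exists b : cochain m, forall g, f g = coboundary b g) ->
    exists b : cochain m, bounded_cochain abs b /\ forall g, f g = coboundary b g.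
End Cochains.

Section Chains.
Variables (G : Type) (mul : G -> G -> G).

(* an integral n-chain, given as a finite formal sum  sum_p  p.1 [p.2] *)
Definition chain n := seq (int * ('I_n -> G)).

Definition chain_val n (c : chain n) (t : 'I_n -> G) : int :=
  \sum_(p <- c) (if pselect (p.2 = t) then p.1 else 0).

Definition chain_bd m (c : chain m.+1) : chain m :=
  flatten [seq ((p.1, face_first p.2) : int * ('I_m -> G))
                 :: [seq (((-1) ^+ k.+1 * p.1)%R, face_mul mul p.2 k)
                    | k : 'I_m <- enum 'I_m]
                 ++ [:: (((-1) ^+ m.+1 * p.1)%R, face_last p.2)]
            | p : int * ('I_m.+1 -> G) <- c].

Definition is_cycle m : chain m -> Prop :=
  match m return chain m -> Prop with
  | 0 => fun _ => True
  | k.+1 => fun c => forall t, chain_val (chain_bd c) t = 0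
  end.

(* H_m(G, Z) is a finitely generated abelian group: there are finitely many
   cycles z_1..z_r such that every cycle is an integral combination of them
   modulo a boundary. *)
Definition homology_fin_gen (m : nat) : Prop :=
  exists zs : seq (chain m),
    (forall i, (i < size zs)%N -> is_cycle (nth [::] zs i)) /\
    forall c : chain m, is_cycle c ->
      exists (a : seq int) (b : chain m.+1), size a = size zs /\
        forall t, chain_val c t =
          \sum_(i < size zs) a`_i * chain_val (nth [::] zs i) t
          + chain_val (chain_bd b) t.
End Chains.

(* Main.v *)
Require Import Defs.
From mathcomp Require Import all_boot all_order all_algebra.
From mathcomp Require Import boolp reals.
From mathcomp Require Import classical_sets.
From mathcomp Require Import zify ring lra.
Set Implicit Arguments. Unset Strict Implicit. Unset Printing Implicit Defensive.
Import Order.TTheory GRing.Theory Num.Theory.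
Local Open Scope ring_scope.

Section Bar.
Variables (G : Type) (mul : G -> G -> G).
Hypothesis mulA : forall x y z, mul x (mul y z) = mul (mul x y) z.

Definition Fi (i : nat) (ga : nat -> G) (l : nat) : G :=
  if (l.+1 < i)%N then ga l else if (l.+1 == i)%N then mul (ga l) (ga l.+1) else ga l.+1.

Lemma Fi_simpl i j ga l : (i <= j)%N -> Fi j (Fi i ga) l = Fi i (Fi j.+1 ga) l.
Proof.
move=> hij; rewrite /Fi.
do ![case: ifP => ?]; try lia; try done; by rewrite mulA.
Qed.

Lemma Fi_local i g1 g2 l : g1 l = g2 l -> g1 l.+1 = g2 l.+1 -> Fi i g1 l = Fi i g2 l.
Proof. by move=> h1 h2; rewrite /Fi h1 h2. Qed.

Definition cobd (Rg : comNzRingType) n (f : ('I_n -> G) -> Rg) : ('I_n.+1 -> G) -> Rg :=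
  fun g => f (face_first g) + \sum_(k < n) (-1) ^+ k.+1 * f (face_mul mul g k)
  + (-1) ^+ n.+1 * f (face_last g).

Definition gam n (g : 'I_n.+1 -> G) : nat -> G := fun l => g (inord l).

Lemma cobdE (Rg : comNzRingType) n (f : ('I_n -> G) -> Rg) g :
  cobd f g = \sum_(i < n.+2) (-1) ^+ i * f (fun l : 'I_n => Fi i (gam g) l).
Proof.
rewrite big_ord_recl big_ord_recr /= /cobd -addrA; congr (_ + (_ + _)).
- rewrite expr0 mul1r; congr f; apply: funext => l.
  rewrite /Fi /gam /face_first /=; congr g; apply: val_inj; rewrite /= inordK //.
  by rewrite ltnS.
- apply: eq_bigr => k _; congr (_ * f _); apply: funext => l.
  rewrite /Fi /gam /face_mul /= !ltnS eqSS.
  have e1 : widen_ord (leqnSn n) l = inord l.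
    by apply: val_inj; rewrite /= inordK // ltnS ltnW.
  have e2 : lift ord0 l = inord l.+1 :> 'I_n.+1.
    by apply: val_inj; rewrite /= inordK // ltnS.
  by rewrite e1 e2.
- congr (_ * f _); apply: funext => l.
  rewrite /Fi /gam /face_last /= ltnS ltn_ord; congr g.
  by apply: val_inj; rewrite /= inordK // ltnS ltnW.
Qed.

Lemma tri_sum (V : zmodType) (a : nat -> nat -> V) n :
  (forall i j, (i <= j)%N -> a i j = - a j.+1 i) ->
  \sum_(i < n.+1) \sum_(j < n) a i j = 0.
Proof.
move=> H; elim: n => [|n IH]; first by rewrite big1 // => i _; rewrite big_ord0.
rewrite big_ord_recr /=.
rewrite (eq_bigr (fun i : 'I_n.+1 => \sum_(j < n) a i j + a i n)); last first.
  by move=> i _; rewrite big_ord_recr.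
rewrite big_split /= IH add0r -big_split /= big1 // => i _.
by rewrite (H i n) ?addNr // -ltnS ltn_ord.
Qed.

Lemma cobd_cobd (Rg : comNzRingType) n (f : ('I_n -> G) -> Rg) g :
  cobd (cobd f) g = 0.
Proof.
rewrite cobdE.
under eq_bigr => i _ do rewrite cobdE.
pose a i j := (-1) ^+ (i + j) * f (fun l : 'I_n => Fi j (Fi i (gam g)) l).
rewrite (eq_bigr (fun i : 'I_n.+3 => \sum_(j < n.+2) a i j)).
  apply: tri_sum => i j hij; rewrite /a.
  have -> : (fun l : 'I_n => Fi i (Fi j.+1 (gam g)) l) = (fun l => Fi j (Fi i (gam g)) l).
    by apply: funext => l; apply/esym/Fi_simpl.
  by rewrite addnC addSn exprS mulN1r mulNr opprK addnC.
move=> i _; rewrite big_distrr; apply: eq_bigr => j _; rewrite /a exprD -mulrA; congr (_ * (_ * f _)).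
apply: funext => l; apply: Fi_local; rewrite /gam inordK //.
- by rewrite ltnS ltnW.
- by rewrite ltnS.
Qed.
End Bar.
Section Ext.
Variables (X P : Type) (A : zmodType) (bd : P -> X -> int) (ev : P -> A)
  (padd : P -> P -> P) (pscale : int -> P -> P).
Hypotheses (bd_add : forall p q x, bd (padd p q) x = bd p x + bd q x)
 (ev_add : forall p q, ev (padd p q) = ev p + ev q)
 (bd_scale : forall z p x, bd (pscale z p) x = z * bd p x)
 (ev_scale : forall z p, ev (pscale z p) = ev p *~ z)
 (bd_fin : forall p, exists l : seq X, forall x, bd p x != 0 -> List.In x l).

Definition Dm (y : X -> int) := exists p, bd p = y.
Definition DS (S : set X) y := Dm y /\ forall x, ~ S x -> y x = 0.
Definition Good (S : set X) (psi : (X -> int) -> A) :=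
  (forall y1 y2, DS S y1 -> DS S y2 -> psi (fun x => y1 x - y2 x) = psi y1 - psi y2) /\
  (forall y, DS S y -> exists p, bd p = y /\ psi y = ev p).

Record obj := Obj { oS : set X; opsi : (X -> int) -> A; ogood : Good oS opsi }.
Definition Rle (a b : obj) : Prop :=
  (forall x, oS a x -> oS b x) /\ forall y, DS (oS a) y -> opsi b y = opsi a y.

Lemma Dm_sub y1 y2 : Dm y1 -> Dm y2 -> Dm (fun x => y1 x - y2 x).
Proof.
move=> [p1 <-] [p2 <-]; exists (padd p1 (pscale (-1) p2)); apply: funext => x.
by rewrite bd_add bd_scale mulN1r.
Qed.

Lemma Dm_scale z y : Dm y -> Dm (fun x => z * y x).
Proof. by move=> [p <-]; exists (pscale z p); apply: funext => x; rewrite bd_scale. Qed.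

Lemma DS_sub S y1 y2 : DS S y1 -> DS S y2 -> DS S (fun x => y1 x - y2 x).
Proof.
move=> [d1 h1] [d2 h2]; split; first exact: Dm_sub.
by move=> x nx; rewrite h1 // h2 // subr0.
Qed.

Lemma DS_scale S z y : DS S y -> DS S (fun x => z * y x).
Proof. by move=> [d h]; split; [exact: Dm_scale | move=> x nx; rewrite h // mulr0]. Qed.

Lemma DS_mono (S S' : set X) y : (forall x, S x -> S' x) -> DS S y -> DS S' y.
Proof. by move=> sub [d h]; split => // x nx; apply: h => Sx; apply: nx; apply: sub. Qed.

Lemma bot_good : Good set0 (fun _ => 0).
Proof.
split; first by move=> *; rewrite subr0.
move=> y [[p hp] hy]; exists (pscale 0 p); split.
  by apply: funext => x; rewrite bd_scale mul0r hy.
by rewrite ev_scale mulr0z.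
Qed.

Definition bot := Obj bot_good.

Lemma ub (C : set obj) : total_on C (fun a b => `[< Rle a b >]) ->
  exists t, forall s, C s -> `[< Rle s t >].
Proof.
move=> tot.
case: (pselect (exists a, C a)) => [[a0 Ca0]|nC]; last first.
  by exists bot => s Cs; exfalso; apply: nC; exists s.
have totR : forall a b, C a -> C b -> Rle a b \/ Rle b a.
  by move=> a b Ca Cb; case: (tot a b Ca Cb) => /asboolP; [left|right].
pose S := fun x => exists a, C a /\ oS a x.
have key : forall y, DS S y -> exists a, C a /\ DS (oS a) y.
  move=> y [[p hp] hy]; have [l hl] := bd_fin p.
  suff [a [Ca ha]] : exists a, C a /\ forall x, List.In x l -> bd p x != 0 -> oS a x.
    exists a; split => //; split; first by exists p.
    move=> x nx; rewrite -hp; apply/eqP; apply: contraT => hx.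
    by exfalso; apply: nx; apply: ha => //; apply: hl.
  elim: l {hl} => [|x l [a [Ca ha]]]; first by exists a0.
  have [bx|bx] := eqVneq (bd p x) 0.
    by exists a; split => // x' [<-|/ha//]; rewrite bx eqxx.
  have [Sx|nSx] := pselect (S x); last by exfalso; move: bx; rewrite hp hy ?eqxx.
  case: Sx => a' [Ca' a'x].
  case: (totR a a' Ca Ca') => [[sub _]|[sub _]].
    by exists a'; split => // x' [<-//|/ha h /h]; apply: sub.
  by exists a; split => // x' [<- _|/ha//]; apply: sub.
pose psi y := match pselect (exists a, C a /\ DS (oS a) y) with
  | left H => opsi (projT1 (cid H)) y | right _ => 0 end.
have agree : forall a y, C a -> DS (oS a) y -> psi y = opsi a y.
  move=> a y Ca Dy; rewrite /psi; case: pselect => [H|nH]; last first.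
    by exfalso; apply: nH; exists a.
  case: (cid H) => a' [Ca' Dy'] /=.
  by case: (totR a a' Ca Ca') => [[_ e]|[_ e]]; rewrite e.
have two : forall y1 y2, DS S y1 -> DS S y2 ->
    exists a, C a /\ DS (oS a) y1 /\ DS (oS a) y2.
  move=> y1 y2 h1 h2; have [a1 [Ca1 d1]] := key _ h1; have [a2 [Ca2 d2]] := key _ h2.
  case: (totR a1 a2 Ca1 Ca2) => [[sub _]|[sub _]].
    by exists a2; split => //; split => //; apply: DS_mono d1.
  by exists a1; split => //; split => //; apply: DS_mono d2.
have gS : Good S psi.
  split.
  - move=> y1 y2 h1 h2; have [a [Ca [d1 d2]]] := two _ _ h1 h2.
    rewrite !(agree a) //; last exact: DS_sub.
    exact: (ogood a).1.
  - move=> y h; have [a [Ca d]] := key y h; rewrite (agree a) //.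
    exact: (ogood a).2.
exists (Obj gS) => s Cs; apply/asboolP; split => [x sx|y dy] /=.
  by exists s.
exact: agree.
Qed.

Lemma extend (t : obj) x0 : ~ oS t x0 -> exists t', Rle t t' /\ oS t' x0.
Proof.
move=> nx0.
pose S' := fun x => oS t x \/ x = x0.
have sub : (forall x, oS t x -> S' x) by move=> x h; left.
case: (pselect (exists y, DS S' y /\ y x0 != 0)) => [[yy [dyy nz]]|nE]; last first.
  have g : Good S' (opsi t).
    have hD : forall y, DS S' y -> DS (oS t) y.
      move=> y [d h]; split => // x nx.
      have [->|ne] := pselect (x = x0).
        apply/eqP; apply: contraT => hx; exfalso; apply: nE; exists y.
        by split; [split|].
      by apply: (h x) => -[].
    split.
    - by move=> y1 y2 h1 h2; apply: (ogood t).1; apply: hD.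
    - by move=> y h; apply: (ogood t).2; apply: hD.
  exists (Obj g); split; first split; [exact: sub | by [] | by right].
pose Pk k := (0 < k)%N && `[< exists y, DS S' y /\ `|y x0|%N = k >].
have exk : exists k, Pk k.
  exists `|yy x0|%N; rewrite /Pk absz_gt0 nz /=; apply/asboolP; by exists yy.
case: (ex_minnP exk) => k /andP[k0 /asboolP [y0 [dy0 hy0]]] kmin.
have [y1 [dy1 hy1]] : exists y1, DS S' y1 /\ y1 x0 = k%:Z.
  have : y0 x0 = k%:Z \/ y0 x0 = - k%:Z by lia.
  case=> h; first by exists y0.
  exists (fun x => -1 * y0 x); split; first exact: DS_scale.
  by rewrite h mulN1r opprK.
have [p0 hp0] := dy1.1.
have kn0 : k%:Z != 0 by lia.
have div : forall y, DS S' y -> y x0 = (y x0 %/ k)%Z * k%:Z.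
  move=> y dy; set q := (y x0 %/ k)%Z.
  have e := divz_eq (y x0) k%:Z.
  have r0 := modz_ge0 (y x0) kn0.
  have r1 : ((y x0 %% k)%Z < k%:Z) by apply: ltz_pmod; rewrite ltz_nat.
  suff : (y x0 %% k)%Z = 0 by move=> h; rewrite {1}e h addr0.
  apply: contraTeq isT => rn0.
  have dz : DS S' (fun x => y x - q * y1 x) by apply: DS_sub => //; apply: DS_scale.
  have : Pk `|(y x0 %% k)%Z|%N.
    rewrite /Pk; apply/andP; split; first by rewrite absz_gt0.
    apply/asboolP; exists (fun x => y x - q * y1 x); split => //.
    by rewrite hy1 {1}e addrAC subrr add0r.
  move=> /kmin; lia.
pose psi' y := opsi t (fun x => y x - (y x0 %/ k)%Z * y1 x) + ev p0 *~ (y x0 %/ k)%Z.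
have hz : forall y, DS S' y -> DS (oS t) (fun x => y x - (y x0 %/ k)%Z * y1 x).
  move=> y dy; split; first by apply: Dm_sub; [exact: dy.1 | apply: Dm_scale; exact: dy1.1].
  move=> x nx; have [->|ne] := pselect (x = x0).
    by rewrite hy1 -div // subrr.
  by rewrite dy.2 ?dy1.2 ?mulr0 ?subr0 // => -[].
have g : Good S' psi'.
  split.
  - move=> y y' h h'; rewrite /psi'.
    have -> : ((y x0 - y' x0) %/ k)%Z = (y x0 %/ k)%Z - (y' x0 %/ k)%Z.
      by rewrite {1}(div y h) {1}(div y' h') -mulrBl mulzK.
    have -> : (fun x => y x - y' x - ((y x0 %/ k)%Z - (y' x0 %/ k)%Z) * y1 x) =
      (fun x => (y x - (y x0 %/ k)%Z * y1 x) - (y' x - (y' x0 %/ k)%Z * y1 x)).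
      by apply: funext => x; ring.
    rewrite (ogood t).1; try exact: hz.
    rewrite mulrzBr addrACA opprD //.
  - move=> y h; have [p1 [hp1 e1]] := (ogood t).2 _ (hz y h).
    exists (padd p1 (pscale (y x0 %/ k)%Z p0)); split.
      by apply: funext => x; rewrite bd_add bd_scale hp1 hp0 subrK.
    by rewrite /psi' e1 ev_add ev_scale.
exists (Obj g); split; last by right.
split => // y dy /=; rewrite /psi'.
have y0x : y x0 = 0 by apply: dy.2.
rewrite y0x div0z mulr0z addr0; congr (opsi t _); apply: funext => x.
by rewrite mul0r subr0.
Qed.

Lemma ext_exists : exists psi : (X -> int) -> A,
  (forall y1 y2, Dm y1 -> Dm y2 -> psi (fun x => y1 x - y2 x) = psi y1 - psi y2) /\
  (forall y, Dm y -> exists p, bd p = y /\ psi y = ev p).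
Proof.
have refl : forall a, `[< Rle a a >].
  by move=> a; apply/asboolP; split.
have trans : forall r s t, `[< Rle r s >] -> `[< Rle s t >] -> `[< Rle r t >].
  move=> r s t /asboolP [s1 e1] /asboolP [s2 e2]; apply/asboolP; split.
    by move=> x h; apply/s2/s1.
  by move=> y d; rewrite e2 ?e1 //; apply: DS_mono d.
have [t tmax] := @ZL_preorder obj bot (fun a b => `[< Rle a b >]) refl trans ub.
have full : forall x, oS t x.
  move=> x; case: (pselect (oS t x)) => // nx.
  have [t' [Rtt' t'x]] := extend nx.
  have /asboolP [sub _] := tmax t' (asboolT Rtt').
  by exfalso; apply: nx; apply: sub.
have DSD : forall y, Dm y -> DS (oS t) y by move=> y d; split => // x nx; exfalso; apply: nx.
exists (opsi t); split.
  by move=> y1 y2 d1 d2; apply: (ogood t).1; apply: DSD.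
by move=> y d; apply: (ogood t).2; apply: DSD.
Qed.
End Ext.
Section Chains2.
Variables (G : Type) (mul : G -> G -> G).
Hypothesis mulA : forall x y z, mul x (mul y z) = mul (mul x y) z.

Definition eval (Rg : comNzRingType) n (phi : ('I_n -> G) -> Rg) (c : chain G n) : Rg :=
  \sum_(p <- c) p.1%:~R * phi p.2.

Definition pscale n (z : int) (c : chain G n) : chain G n := [seq (z * p.1, p.2) | p <- c].

Lemma eval_cat (Rg : comNzRingType) n (phi : ('I_n -> G) -> Rg) c1 c2 :
  eval phi (c1 ++ c2) = eval phi c1 + eval phi c2.
Proof. by rewrite /eval big_cat. Qed.

Lemma eval_pscale (Rg : comNzRingType) n (phi : ('I_n -> G) -> Rg) z c :
  eval phi (pscale z c) = z%:~R * eval phi c.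
Proof.
rewrite /eval /pscale big_map big_distrr; apply: eq_bigr => p _ /=.
by rewrite intrM mulrA.
Qed.

Lemma eval1 (Rg : comNzRingType) n (phi : ('I_n -> G) -> Rg) t :
  eval phi [:: (1, t)] = phi t.
Proof. by rewrite /eval big_cons big_nil /= mul1r addr0. Qed.

Lemma eval_bd (Rg : comNzRingType) n (phi : ('I_n -> G) -> Rg) (c : chain G n.+1) :
  eval phi (chain_bd mul c) = eval (cobd mul phi) c.
Proof.
rewrite /eval /chain_bd big_flatten big_map; apply: eq_bigr => p _.
rewrite big_cons big_cat big_map big_cons big_nil /cobd big_enum /=.
rewrite !mulrDr addr0 addrA; congr (_ + _ + _).
  rewrite big_distrr; apply: eq_bigr => k _ /=.
  by rewrite intrM intr_sign -mulrA mulrCA.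
by rewrite intrM intr_sign -mulrA mulrCA.
Qed.

Definition ind n (t : 'I_n -> G) : ('I_n -> G) -> int :=
  fun u => if pselect (u = t) then 1 else 0.

Lemma chain_valE n (c : chain G n) t : chain_val c t = eval (ind t) c.
Proof.
rewrite /chain_val /eval; apply: eq_bigr => p _; rewrite /ind intz.
by case: pselect => h; rewrite ?mulr1 ?mulr0.
Qed.

Lemma bdbd n (c : chain G n.+2) t : chain_val (chain_bd mul (chain_bd mul c)) t = 0.
Proof.
rewrite chain_valE !eval_bd /eval big1 // => p _.
by rewrite cobd_cobd // mulr0.
Qed.

Lemma cv_cat n (c1 c2 : chain G n) t : chain_val (c1 ++ c2) t = chain_val c1 t + chain_val c2 t.
Proof. by rewrite /chain_val big_cat. Qed.

Lemma bd_cat n (c1 c2 : chain G n.+1) :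
  chain_bd mul (c1 ++ c2) = chain_bd mul c1 ++ chain_bd mul c2.
Proof. by rewrite /chain_bd map_cat flatten_cat. Qed.

Lemma cv_pscale n (c : chain G n) z t : chain_val (pscale z c) t = z * chain_val c t.
Proof. by rewrite !chain_valE eval_pscale intz. Qed.

Lemma cv_bd_pscale n (c : chain G n.+1) z t :
  chain_val (chain_bd mul (pscale z c)) t = z * chain_val (chain_bd mul c) t.
Proof. by rewrite !chain_valE !eval_bd eval_pscale intz. Qed.

Lemma cv_fin n (c : chain G n) t : chain_val c t != 0 -> List.In t (map snd c).
Proof.
elim: c => [|p c IH]; first by rewrite /chain_val big_nil eqxx.
rewrite /chain_val big_cons /=; case: pselect => [e|ne]; first by left.
by rewrite add0r => /IH; right.
Qed.

Lemma eval_zero (Rg : comNzRingType) n (phi : ('I_n -> G) -> Rg) (c : chain G n) :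
  (forall t, chain_val c t = 0) -> eval phi c = 0.
Proof.
move: {2}(size c) (leqnn (size c)) => N; elim: N c => [|N IH] [|[a t] c] //= hs hz;
  try by rewrite /eval big_nil.
pose Pt := fun p : int * ('I_n -> G) => `[< p.2 = t >].
rewrite /eval (bigID Pt) /=.
have -> : \sum_(i <- (a, t) :: c | Pt i) i.1%:~R * phi i.2 =
          (\sum_(i <- (a, t) :: c | Pt i) i.1)%:~R * phi t.
  rewrite rmorph_sum big_distrl /=; apply: eq_bigr => p /asboolP -> //.
have -> : \sum_(i <- (a, t) :: c | Pt i) i.1 = chain_val ((a, t) :: c) t.
  rewrite /chain_val big_mkcond; apply: eq_bigr => p _; rewrite /Pt.
  by case: pselect => h; [rewrite asboolT | rewrite asboolF].
rewrite hz mul0r add0r -big_filter.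
apply: (IH (filter (predC Pt) ((a, t) :: c))).
  rewrite /= /Pt (asboolT (erefl t)) /= size_filter.
  exact: leq_trans (count_size _ _) hs.
move=> u; rewrite /chain_val big_filter.
have [->|ne] := pselect (u = t).
  by rewrite big1 // => p; rewrite /Pt /= => /asboolPn h; case: pselect.
transitivity (chain_val ((a,t)::c) u); last exact: hz.
rewrite /chain_val [RHS](bigID Pt) /= [X in _ = X + _]big1 ?add0r //.
by move=> p /asboolP ->; case: pselect => // e; exfalso; apply: ne.
Qed.

End Chains2.
Section NA.
Variables (R : realType) (K : fieldType) (abs : K -> R) (hK : nonarch_abs abs).

Lemma na_ge0 x : 0 <= abs x. Proof. by case: hK. Qed.
Lemma na0 : abs 0 = 0. Proof. by case: hK => _ h _ _; apply/h. Qed.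
Lemma naM x y : abs (x * y) = abs x * abs y. Proof. by case: hK. Qed.
Lemma naD x y : abs (x + y) <= Num.max (abs x) (abs y). Proof. by case: hK. Qed.
Lemma na1 : abs 1 = 1.
Proof.
have e := naM 1 1; rewrite mulr1 in e.
have x0 : abs 1 != 0 by apply/eqP; case: hK => _ h _ _ /h /eqP; rewrite oner_eq0.
by apply: (mulfI x0); rewrite mulr1 -e.
Qed.
Lemma naN1 : abs (-1) = 1.
Proof.
have e := naM (-1) (-1); rewrite mulrNN mulr1 na1 in e.
have h := na_ge0 (-1).
have : (abs (-1) - 1) * (abs (-1) + 1) = 0.
  have -> : (abs (-1) - 1) * (abs (-1) + 1) = abs (-1) * abs (-1) - 1 by ring.
  by rewrite -e subrr.
move/eqP; rewrite mulf_eq0 => /orP[]; first by rewrite subr_eq0 => /eqP.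
move=> /eqP h2; exfalso; lra.
Qed.
Lemma naN x : abs (- x) = abs x. Proof. by rewrite -mulN1r naM naN1 mul1r. Qed.
Lemma na_int (z : int) : abs (z%:~R) <= 1.
Proof.
have hn : forall n : nat, abs (n%:R) <= 1.
  elim => [|n IH]; first by rewrite na0 ler01.
  by rewrite mulrSr (le_trans (naD _ _)) // ge_max IH na1 lexx.
case: z => n; first exact: hn.
by rewrite NegzE mulrNz naN; exact: hn.
Qed.
Lemma na_zmul z x : abs (z%:~R * x) <= abs x.
Proof.
rewrite naM; have h1 := na_int z; have h2 := na_ge0 x; have h3 := na_ge0 (z%:~R); nra.
Qed.
Lemma na_sum (I : Type) (s : seq I) (F : I -> K) B : 0 <= B ->
  (forall i, abs (F i) <= B) -> abs (\sum_(i <- s) F i) <= B.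
Proof.
move=> hB hF; elim: s => [|i s IH]; first by rewrite big_nil na0.
by rewrite big_cons (le_trans (naD _ _)) // ge_max hF IH.
Qed.
End NA.

Lemma cv_flatten (G : Type) n (L : seq (chain G n)) t :
  chain_val (flatten L) t = \sum_(c <- L) chain_val c t.
Proof. by rewrite /chain_val big_flatten. Qed.

Lemma eval_flatten (G : Type) (Rg : comNzRingType) n phi (L : seq (chain G n)) :
  eval (Rg := Rg) phi (flatten L) = \sum_(c <- L) eval phi c.
Proof. by rewrite /eval big_flatten. Qed.

Lemma cobd_sub (G : Type) (mul : G -> G -> G) (Rg : comNzRingType) n
  (f1 f2 : ('I_n -> G) -> Rg) g :
  cobd mul (fun t => f1 t - f2 t) g = cobd mul f1 g - cobd mul f2 g.
Proof. by rewrite !cobdE -sumrB; apply: eq_bigr => i _; rewrite mulrBr. Qed.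

Theorem corollary9p44 (R : realType) (K : fieldType) (abs : K -> R)
  (hK : nonarch_abs abs)
  (G : Type) (mul : G -> G -> G) (one : G) (inv : G -> G)
  (hG : is_group mul one inv) (m : nat) :
  homology_fin_gen mul m -> comparison_injective mul abs m.
Proof.
move=> hfg f fbd fcoc [b hb].
have [mulA _ _ _ _] := hG.
case: m hfg f fbd fcoc b hb => [|m] hfg f fbd fcoc b hb.
  exists b; split => //; exists (abs (b (fun _ => one))) => g.
  have -> : g = (fun _ => one) by apply: funext => -[].
  exact: lexx.
have [M hM] := fbd.
have M0 : 0 <= M by apply: le_trans (hM (fun _ => one)); apply: na_ge0 hK _.
have [zs [hzs hrep]] := hfg.
pose Bz := \sum_(i < size zs) abs (eval b (nth [::] zs i)).
have Bz0 : 0 <= Bz by apply: sumr_ge0 => i _; apply: na_ge0 hK _.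
pose M1 := M + Bz.
have bnd : forall c : chain G m.+1, (forall t, chain_val (chain_bd mul c) t = 0) ->
    abs (eval b c) <= M1.
  move=> c hc.
  have [a [bb [ha ht]]] := hrep c hc.
  pose c' := flatten [seq pscale a`_i (nth [::] zs i) | i : 'I_(size zs) <- enum 'I_(size zs)]
             ++ chain_bd mul bb.
  have E : forall (V : zmodType) (F : 'I_(size zs) -> V),
      \sum_(i <- enum 'I_(size zs)) F i = \sum_(i < size zs) F i.
    by move=> V F; rewrite big_enum.
  have e : eval b c = eval b c'.
    apply/eqP; rewrite -subr_eq0; apply/eqP.
    have := @eval_zero _ _ _ b (c ++ pscale (-1) c').
    rewrite eval_cat eval_pscale mulN1r => -> // t.
    rewrite cv_cat cv_pscale /c' cv_cat cv_flatten big_map E /= ht.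
    rewrite mulN1r; apply/eqP; rewrite subr_eq0; apply/eqP; congr (_ + _).
    by apply: eq_bigr => i _; rewrite cv_pscale.
  rewrite e /c' eval_cat eval_flatten big_map E eval_bd.
  rewrite (le_trans (naD hK _ _)) // ge_max; apply/andP; split.
    have hB : Bz <= M1 by rewrite /M1; lra.
    apply: le_trans hB.
    apply: na_sum => // i; rewrite eval_pscale (le_trans (na_zmul hK _ _)) //.
    rewrite /Bz (bigD1 i) //= lerDl; apply: sumr_ge0 => j _; exact: na_ge0 hK _.
  have hM' : M <= M1 by rewrite /M1; lra.
  apply: le_trans hM'.
  apply: na_sum => // p; rewrite (le_trans (na_zmul hK _ _)) //.
  by change (abs (coboundary mul b p.2) <= M); rewrite -hb.
have bfin : forall p : chain G m.+1, exists l : seq ('I_m -> G),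
    forall x, chain_val (chain_bd mul p) x != 0 -> List.In x l.
  by move=> p; exists (map snd (chain_bd mul p)) => x; apply: cv_fin.
have [psi [hadd hreal]] := @ext_exists ('I_m -> G) (chain G m.+1) K
  (fun p x => chain_val (chain_bd mul p) x) (eval b) cat (@pscale G m.+1)
  (fun p q x => etrans (congr1 (fun c => chain_val c x) (bd_cat mul p q)) (cv_cat _ _ _))
  (fun p q => eval_cat b p q)
  (fun z p x => cv_bd_pscale mul p z x)
  (fun z p => etrans (eval_pscale b z p) (mulrzl _ _))
  bfin.
pose B (t : 'I_m.+1 -> G) : ('I_m -> G) -> int :=
  fun x => chain_val (chain_bd mul [:: ((1 : int), t)]) x.
pose Dm' := fun y : ('I_m -> G) -> int => exists p : chain G m.+1,
  (fun x => chain_val (chain_bd mul p) x) = y.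
have D0 : Dm' (fun _ => 0).
  by exists [::]; apply: funext => x; rewrite /chain_val big_nil.
have psi0 : psi (fun _ => 0) = 0.
  have := hadd _ _ D0 D0; rewrite subrr.
  by have -> : (fun _ : 'I_m -> G => (0 : int) - 0) = (fun _ => 0) by apply: funext => x; rewrite subr0.
have DmN : forall y, Dm' y -> Dm' (fun x => - y x).
  move=> y [p <-]; exists (pscale (-1) p); apply: funext => x.
  by rewrite cv_bd_pscale mulN1r.
have DmD : forall y1 y2, Dm' y1 -> Dm' y2 -> Dm' (fun x => y1 x + y2 x).
  move=> y1 y2 [p1 <-] [p2 <-]; exists (p1 ++ p2); apply: funext => x.
  by rewrite bd_cat cv_cat.
have psiN : forall y, Dm' y -> psi (fun x => - y x) = - psi y.
  move=> y d; have := hadd _ _ D0 d; rewrite psi0 sub0r => <-.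
  by congr psi; apply: funext => x; rewrite sub0r.
have psiD : forall y1 y2, Dm' y1 -> Dm' y2 ->
    psi (fun x => y1 x + y2 x) = psi y1 + psi y2.
  move=> y1 y2 d1 d2; have := hadd _ _ d1 (DmN _ d2); rewrite psiN // opprK => <-.
  by congr psi; apply: funext => x; rewrite opprK.
have psiZ : forall y (q : int), Dm' y -> psi (fun x => q * y x) = q%:~R * psi y.
  move=> y q d.
  have hn : forall n : nat, psi (fun x => n%:Z * y x) = n%:R * psi y.
    elim => [|n IH].
      by rewrite mul0r -psi0; congr psi; apply: funext => x; rewrite mul0r.
    have dn : Dm' (fun x => n%:Z * y x).
      by case: d => p <-; exists (pscale n p); apply: funext => x; rewrite cv_bd_pscale.
    rewrite mulrSr mulrDl mul1r -IH -psiD //.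
    by congr psi; apply: funext => x; rewrite -addn1 PoszD mulrDl mul1r.
  case: q => n; first by rewrite hn.
  have dn : Dm' (fun x => (n.+1)%:Z * y x).
    by case: d => p <-; exists (pscale n.+1 p); apply: funext => x; rewrite cv_bd_pscale.
  have -> : (fun x => Negz n * y x) = (fun x => - ((n.+1)%:Z * y x)).
    by apply: funext => x; rewrite NegzE mulNr.
  by rewrite psiN // hn NegzE mulrNz mulNr.
have DB : forall t, Dm' (B t) by move=> t; exists [:: (1, t)].
have key : forall c : chain G m.+1,
    eval (fun t => psi (B t)) c = psi (fun x => chain_val (chain_bd mul c) x).
  elim => [|[q t] c IH].
    rewrite /eval big_nil -psi0; congr psi; apply: funext => x.
    by rewrite /chain_val big_nil.
  rewrite /eval big_cons -/(eval (fun t => psi (B t)) c) IH /=.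
  have -> : (fun x => chain_val (chain_bd mul ((q, t) :: c)) x) =
      (fun x => q * B t x + chain_val (chain_bd mul c) x).
    apply: funext => x; rewrite -cat1s bd_cat cv_cat.
    have -> : [:: (q, t)] = pscale q [:: (1, t)] by rewrite /pscale /= mulr1.
    by rewrite cv_bd_pscale.
  rewrite psiD ?psiZ //; last by exists c.
  by case: (DB t) => p <-; exists (pscale q p); apply: funext => x; rewrite cv_bd_pscale.
exists (fun t => b t - psi (B t)); split.
  exists M1 => t.
  have [p [hp ep]] := hreal (B t) (DB t).
  have := bnd ([:: (1, t)] ++ pscale (-1) p).
  rewrite eval_cat eval_pscale eval1 -ep mulN1r; apply => x.
  rewrite bd_cat cv_cat cv_bd_pscale.
  have -> : chain_val (chain_bd mul p) x = B t x by rewrite -hp.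
  by rewrite mulN1r subrr.
move=> g; rewrite hb.
change (cobd mul b g = cobd mul (fun t => b t - psi (B t)) g).
rewrite cobd_sub.
suff -> : cobd mul (fun t => psi (B t)) g = 0 by rewrite subr0.
rewrite -(eval1 (cobd mul (fun t => psi (B t)))) -eval_bd key -psi0.
by congr psi; apply: funext => x; rewrite bdbd.
Qed.
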